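(* Let $\varphi:[0,1]\to[0,1]$ be non-decreasing and continuously differentiable with $\varphi(0)=0$, $\varphi(1)=1$, and suppose $z\mapsto z\varphi(z)$ is convex. Consider the problem of finding a piecewise constant function $\psi$ on $[0,1]$ with $2$ pieces (i.e. constant on $[0,z)$ and on $[z,1]$ for some $z\in[0,1]$) such that $\psi\leq\varphi$ on $[0,1]$ and $\int_0^1(\varphi(t)-\psi(t))\,dt$ is minimal. Then the minimum is reached with a step $z$ satisfying $(1-z)\varphi'(z)=\varphi(z)$. *)

(* Defs.v *)
From Stdlib Require Import Reals.
From Coquelicot Require Import Coquelicot.
Open Scope R_scope.

Definition in01 (x : R) : Prop := 0 <= x <= 1.

Definition has_derivative_on01 (f f' : R -> R) : Prop :=
  forall x, in01 x ->
    filterlim (fun y => (f y - f x) / (y - x))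
      (within (fun y => in01 y /\ y <> x) (locally x)) (locally (f' x)).

Definition continuous_on01 (g : R -> R) : Prop :=
  forall x, in01 x -> filterlim g (within in01 (locally x)) (locally (g x)).

Definition C1_on01 (f f' : R -> R) : Prop :=
  has_derivative_on01 f f' /\ continuous_on01 f'.

Definition nondecreasing_on01 (f : R -> R) : Prop :=
  forall x y, in01 x -> in01 y -> x <= y -> f x <= f y.

Definition convex_on01 (h : R -> R) : Prop :=
  forall x y t, in01 x -> in01 y -> 0 <= t <= 1 ->
    h (t * x + (1 - t) * y) <= t * h x + (1 - t) * h y.

Definition step2 (z a b : R) (t : R) : R := if Rlt_dec t z then a else b.

Definition below_on01 (psi phi : R -> R) : Prop :=
  forall t, in01 t -> psi t <= phi t.

Definition gap (phi psi : R -> R) : R := RInt (fun t => phi t - psi t) 0 1.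

(* Main.v *)
Require Import Defs.
From Stdlib Require Import Reals Lra.
From Coquelicot Require Import Coquelicot.
Open Scope R_scope.

Lemma ballR (x e y : R) : ball x e y <-> Rabs (y - x) < e.
Proof. reflexivity. Qed.

Lemma deriv_eps phi phi' x : has_derivative_on01 phi phi' -> in01 x ->
  forall eps, 0 < eps -> exists d, 0 < d /\ forall y, in01 y -> y <> x -> Rabs (y - x) < d ->
   Rabs ((phi y - phi x) - phi' x * (y - x)) <= eps * Rabs (y - x).
Proof.
intros H Hx eps He.
destruct (proj1 (filterlim_locally _ _) (H x Hx) (mkposreal eps He)) as [d Hd].
exists d; split; [apply cond_pos|].
intros y Hy Hyx Hyd.
specialize (Hd y Hyd (conj Hy Hyx)). pose proof (proj1 (ballR _ _ _) Hd) as Hd2.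
assert (E: (phi y - phi x) - phi' x * (y - x) = ((phi y - phi x)/(y-x) - phi' x) * (y - x)).
{ field. lra. }
rewrite E, Rabs_mult. apply Rmult_le_compat_r; [apply Rabs_pos|]. apply Rlt_le; exact Hd2.
Qed.

Lemma cont_eps phi phi' x : has_derivative_on01 phi phi' -> in01 x ->
  forall eps, 0 < eps -> exists d, 0 < d /\ forall y, in01 y -> Rabs (y - x) < d ->
   Rabs (phi y - phi x) < eps.
Proof.
intros H Hx eps He.
destruct (deriv_eps phi phi' x H Hx 1 Rlt_0_1) as [d [Hd Hy]].
set (k := Rabs (phi' x) + 1).
assert (Hk : 0 < k) by (unfold k; pose proof (Rabs_pos (phi' x)); lra).
exists (Rmin d (eps / k)). split.
{ apply Rmin_pos; [lra| apply Rdiv_lt_0_compat; lra]. }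
intros y Hy01 Hyd.
destruct (Req_dec y x) as [->|Hne].
{ rewrite Rminus_diag, Rabs_R0; lra. }
assert (H1 : Rabs (y - x) < d) by (eapply Rlt_le_trans; [exact Hyd| apply Rmin_l]).
assert (H2 : Rabs (y - x) < eps / k) by (eapply Rlt_le_trans; [exact Hyd| apply Rmin_r]).
specialize (Hy y Hy01 Hne H1).
assert (H3 : Rabs (phi y - phi x) <= k * Rabs (y - x)).
{ replace (phi y - phi x) with ((phi y - phi x - phi' x * (y - x)) + phi' x * (y - x)) by ring.
  eapply Rle_trans; [apply Rabs_triang|]. rewrite Rabs_mult. unfold k. lra. }
assert (H4 : k * Rabs (y - x) < eps).
{ apply (Rmult_lt_compat_l k) in H2; [|lra]. replace (k * (eps / k)) with eps in H2 by (field; lra). lra. }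
lra.
Qed.

Definition cl (t : R) : R := Rmax 0 (Rmin 1 t).

Lemma cl_in01 t : in01 (cl t).
Proof. unfold cl, in01, Rmax, Rmin. repeat destruct Rle_dec; lra. Qed.

Lemma cl_id t : in01 t -> cl t = t.
Proof. unfold cl, in01, Rmax, Rmin. intros. repeat destruct Rle_dec; lra. Qed.

Lemma cl_lip x y : Rabs (cl y - cl x) <= Rabs (y - x).
Proof. unfold cl, Rmax, Rmin. unfold Rabs. repeat destruct Rle_dec; repeat destruct Rcase_abs; lra. Qed.

Lemma P_cont phi phi' x : has_derivative_on01 phi phi' ->
  continuous (fun t => phi (cl t)) x.
Proof.
intros H. unfold continuous. apply filterlim_locally. intros eps.
destruct (cont_eps phi phi' (cl x) H (cl_in01 x) eps (cond_pos eps)) as [d [Hd Hc]].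
exists (mkposreal d Hd). intros y Hy. apply ballR. apply ballR in Hy. simpl in Hy.
apply Hc; [apply cl_in01|]. eapply Rle_lt_trans; [apply cl_lip|exact Hy].
Qed.

Lemma gap_eq phi phi' z a b : has_derivative_on01 phi phi' -> in01 z ->
  gap phi (step2 z a b) = RInt (fun t => phi (cl t)) 0 1 - (a * z + b * (1 - z)).
Proof.
intros H Hz. set (P := fun t => phi (cl t)).
assert (Ex : forall u v, ex_RInt P u v).
{ intros u v. apply (ex_RInt_continuous (V:=R_CompleteNormedModule)). intros. apply (P_cont phi phi'). exact H. }
assert (I1 : is_RInt (fun t => phi t - step2 z a b t) 0 z (minus (RInt P 0 z) (scal (z - 0) a))).
{ eapply is_RInt_ext; cycle 1.
  - apply (is_RInt_minus P (fun _ => a) 0 z). apply (RInt_correct (V:=R_CompleteNormedModule)), Ex. apply (is_RInt_const (V:=R_NormedModule)).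
  - intros x Hx. rewrite Rmin_left in Hx by (destruct Hz; lra). rewrite Rmax_right in Hx by (destruct Hz; lra).
    unfold P, step2. rewrite cl_id by (unfold in01 in *; lra).
    destruct Rlt_dec; [|lra]. reflexivity. }
assert (I2 : is_RInt (fun t => phi t - step2 z a b t) z 1 (minus (RInt P z 1) (scal (1 - z) b))).
{ eapply is_RInt_ext; cycle 1.
  - apply (is_RInt_minus P (fun _ => b) z 1). apply (RInt_correct (V:=R_CompleteNormedModule)), Ex. apply (is_RInt_const (V:=R_NormedModule)).
  - intros x Hx. rewrite Rmin_left in Hx by (destruct Hz; lra). rewrite Rmax_right in Hx by (destruct Hz; lra).
    unfold P, step2. rewrite cl_id by (unfold in01 in *; lra).
    destruct Rlt_dec; [lra|]. reflexivity. }
pose proof (is_RInt_Chasles _ _ _ _ _ _ I1 I2) as I3.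
unfold gap. rewrite (is_RInt_unique _ _ _ _ I3).
rewrite <- (RInt_Chasles P 0 z 1) by apply Ex.
unfold plus, minus, scal, opp; simpl. unfold mult, plus, opp; simpl. ring.
Qed.

Lemma fermat phi phi' x : has_derivative_on01 phi phi' -> 0 < x < 1 ->
  (forall y, in01 y -> (1 - y) * phi y <= (1 - x) * phi x) ->
  (1 - x) * phi' x = phi x.
Proof.
intros H Hx Hmax.
assert (Hx01 : in01 x) by (unfold in01; lra).
set (p := phi' x). set (A := Rabs p).
assert (HA : 0 <= A) by apply Rabs_pos.
assert (HpA : p <= A /\ - A <= p) by (unfold A; split; [apply Rle_abs| pose proof (Rle_abs (-p)); rewrite Rabs_Ropp in *; lra]).
set (d0 := (1 - x) * p - phi x).
destruct (Rtotal_order d0 0) as [Hneg|[Hz|Hpos]]; [exfalso| unfold d0 in Hz; lra | exfalso].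
- destruct (deriv_eps phi phi' x H Hx01 (- d0 / 2) ltac:(lra)) as [de [Hde Hd]].
  set (h := Rmin (Rmin (de/2) (x/2)) (- d0 / (2 * (A + 1)))).
  assert (Hh1 : h <= de/2) by (unfold h; eapply Rle_trans; [apply Rmin_l| apply Rmin_l]).
  assert (Hh2 : h <= x/2) by (unfold h; eapply Rle_trans; [apply Rmin_l| apply Rmin_r]).
  assert (Hh3 : h <= - d0 / (2 * (A + 1))) by (unfold h; apply Rmin_r).
  assert (Hh0 : 0 < h) by (unfold h; repeat apply Rmin_pos; try lra; apply Rdiv_lt_0_compat; lra).
  assert (Hh4 : h * (A + 1) <= - d0 / 2).
  { apply (Rmult_le_compat_r (A+1)) in Hh3; [|lra]. replace (- d0 / (2 * (A + 1)) * (A + 1)) with (-d0/2) in Hh3 by (field; lra). lra. }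
  set (y := x - h).
  assert (Hy : in01 y) by (unfold in01, y; lra).
  assert (Hyx : Rabs (y - x) = h) by (unfold y; replace (x - h - x) with (-h) by ring; rewrite Rabs_Ropp, Rabs_right; lra).
  specialize (Hd y Hy ltac:(unfold y; lra) ltac:(rewrite Hyx; lra)).
  rewrite Hyx in Hd. fold p in Hd.
  set (r := phi y - phi x - p * (y - x)) in Hd.
  assert (Hr : - (- d0 / 2 * h) <= r <= - d0 / 2 * h) by (apply Rabs_le_between in Hd; lra) .
  specialize (Hmax y Hy).
  assert (E : (1 - y) * phi y - (1 - x) * phi x = - h * d0 - h * h * p + (1 - x + h) * r).
  { unfold r, y, d0. ring. }
  assert (F1 : h * (h * p) <= h * (h * A)) by (apply Rmult_le_compat_l; [lra|]; apply Rmult_le_compat_l; lra).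
  assert (F2 : (1 - x + h) * r >= - (- d0 / 2 * h)).
  { assert (0 <= 1 - x + h <= 1) by lra. nra. }
  nra.
- destruct (deriv_eps phi phi' x H Hx01 (d0 / 2) ltac:(lra)) as [de [Hde Hd]].
  set (h := Rmin (Rmin (de/2) ((1-x)/2)) (d0 / (2 * (A + 1)))).
  assert (Hh1 : h <= de/2) by (unfold h; eapply Rle_trans; [apply Rmin_l| apply Rmin_l]).
  assert (Hh2 : h <= (1-x)/2) by (unfold h; eapply Rle_trans; [apply Rmin_l| apply Rmin_r]).
  assert (Hh3 : h <= d0 / (2 * (A + 1))) by (unfold h; apply Rmin_r).
  assert (Hh0 : 0 < h) by (unfold h; repeat apply Rmin_pos; try lra; apply Rdiv_lt_0_compat; lra).
  assert (Hh4 : h * (A + 1) <= d0 / 2).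
  { apply (Rmult_le_compat_r (A+1)) in Hh3; [|lra]. replace (d0 / (2 * (A + 1)) * (A + 1)) with (d0/2) in Hh3 by (field; lra). lra. }
  set (y := x + h).
  assert (Hy : in01 y) by (unfold in01, y; lra).
  assert (Hyx : Rabs (y - x) = h) by (unfold y; replace (x + h - x) with h by ring; rewrite Rabs_right; lra).
  specialize (Hd y Hy ltac:(unfold y; lra) ltac:(rewrite Hyx; lra)).
  rewrite Hyx in Hd. fold p in Hd.
  set (r := phi y - phi x - p * (y - x)) in Hd.
  assert (Hr : - (d0 / 2 * h) <= r <= d0 / 2 * h) by (apply Rabs_le_between in Hd; lra) .
  specialize (Hmax y Hy).
  assert (E : (1 - y) * phi y - (1 - x) * phi x = h * d0 - h * h * p + (1 - x - h) * r).
  { unfold r, y, d0. ring. }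
  assert (F1 : h * (h * p) <= h * (h * A)) by (apply Rmult_le_compat_l; [lra|]; apply Rmult_le_compat_l; lra).
  assert (F2 : (1 - x - h) * r >= - (d0 / 2 * h)).
  { assert (0 <= 1 - x - h <= 1) by lra. nra. }
  nra.
Qed.

Lemma cl_cont x : continuity_pt cl x.
Proof.
apply continuity_pt_filterlim. apply filterlim_locally. intros eps.
exists eps. intros y Hy. apply ballR. apply ballR in Hy.
eapply Rle_lt_trans; [apply cl_lip|exact Hy].
Qed.

Theorem proposition3 (phi phi' : R -> R) :
  (forall x, in01 x -> in01 (phi x)) ->
  nondecreasing_on01 phi ->
  C1_on01 phi phi' ->
  phi 0 = 0 -> phi 1 = 1 ->
  convex_on01 (fun z => z * phi z) ->
  exists z a b : R,
    in01 z /\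
    below_on01 (step2 z a b) phi /\
    (forall z' a' b' : R, in01 z' -> below_on01 (step2 z' a' b') phi ->
        gap phi (step2 z a b) <= gap phi (step2 z' a' b')) /\
    (1 - z) * phi' z = phi z.
Proof.
intros Hr Hmono [Hd _] H0 H1 _.
set (G := fun t => (1 - cl t) * phi (cl t)).
assert (Gc : forall c, 0 <= c <= 1 -> continuity_pt G c).
{ intros c _. unfold G. apply continuity_pt_mult.
  - apply continuity_pt_minus; [apply continuity_pt_const; intros u v; reflexivity| apply cl_cont].
  - apply continuity_pt_filterlim. apply (P_cont phi phi'). exact Hd. }
destruct (continuity_ab_maj G 0 1 ltac:(lra) Gc) as [x [Hmax Hx]].
assert (Hx01 : in01 x) by exact Hx.
assert (Gid : forall t, in01 t -> G t = (1 - t) * phi t) by (intros t Ht; unfold G; rewrite cl_id; auto).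
destruct (cont_eps phi phi' 1 Hd ltac:(unfold in01; lra) (1/2) ltac:(lra)) as [d [Hd0 Hc]].
set (y := Rmax (1/2) (1 - d/2)).
assert (Hy : 1/2 <= y < 1 /\ 1 - d/2 <= y) by (unfold y, Rmax; destruct Rle_dec; lra).
assert (Hy01 : in01 y) by (unfold in01; lra).
assert (Hpy : phi y > 1/2).
{ specialize (Hc y Hy01 ltac:(rewrite Rabs_left; lra)). rewrite H1 in Hc.
  apply Rabs_lt_between in Hc. lra. }
assert (HGy : G y > 0) by (rewrite Gid by auto; nra).
assert (HGx : G x > 0) by (pose proof (Hmax y ltac:(unfold in01 in Hy01; lra)); lra).
rewrite Gid in HGx by auto.
assert (Hxi : 0 < x < 1).
{ destruct (Req_dec x 0) as [->|]; [rewrite H0 in HGx; lra|].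
  destruct (Req_dec x 1) as [->|]; [lra|]. lra. }
exists x, 0, (phi x). split; [exact Hx01|]. split; [|split].
- intros t Ht. unfold step2. destruct Rlt_dec.
  + apply Hr; auto.
  + apply Hmono; auto. lra.
- intros z' a' b' Hz' Hb.
  rewrite (gap_eq phi phi' x 0 (phi x) Hd Hx01), (gap_eq phi phi' z' a' b' Hd Hz').
  assert (Hb1 : b' <= phi z') by (specialize (Hb z' Hz'); unfold step2 in Hb; destruct Rlt_dec; lra).
  assert (Ha : a' * z' <= 0).
  { destruct (Req_dec z' 0) as [->|]; [lra|].
    specialize (Hb 0 ltac:(unfold in01; lra)). unfold step2 in Hb. destruct Rlt_dec; [|unfold in01 in Hz'; lra].
    rewrite H0 in Hb. unfold in01 in Hz'. nra. }
  assert (HG' : (1 - z') * phi z' <= (1 - x) * phi x).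
  { rewrite <- !Gid by auto. apply Hmax. exact Hz'. }
  assert (0 <= 1 - z') by (unfold in01 in Hz'; lra).
  nra.
- apply fermat; auto. intros t Ht. rewrite <- !Gid by auto. apply Hmax. exact Ht.
Qed.
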